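(* Let $\{|0\rangle,|1\rangle\}$ be an orthonormal basis of $\mathbb{C}^2$ and $\{|0'\rangle,|1'\rangle,|2'\rangle\}$ an orthonormal basis of $\mathbb{C}^3$. Consider in $\mathbb{C}^2\otimes\mathbb{C}^3$ the three states $$\tfrac{1}{\sqrt2}(|0\rangle|0'\rangle-|1\rangle|1'\rangle),\quad \tfrac{1}{\sqrt2}(|0\rangle|1'\rangle+|1\rangle|0'\rangle),\quad \tfrac{1}{\sqrt2}(|0\rangle|1'\rangle-|1\rangle|0'\rangle)$$ (i.e. the set $\{\tfrac{1}{\sqrt2}(|00'\rangle\pm|11'\rangle),\tfrac{1}{\sqrt2}(|01'\rangle\pm|10'\rangle)\}$ with the state $\tfrac{1}{\sqrt2}(|00'\rangle+|11'\rangle)$ removed). Then the orthogonal complement in $\mathbb{C}^2\otimes\mathbb{C}^3$ of the span of these three states does not contain three pairwise orthogonal maximally entangled states; hence these three states cannot be completed to an orthonormal basis of $\mathbb{C}^2\otimes\mathbb{C}^3$ consisting of maximally entangled states.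
   Context: A pure state of $\mathbb{C}^2\otimes\mathbb{C}^3$ is maximally entangled if it has two equal nonzero Schmidt coefficients, equivalently its reduced state on the qubit is the maximally mixed state $I/2$. *)

(* Defs.v *)
(* C^2 (x) C^3 is represented by coefficient matrices
   'M[C]_(2,3): psi i j is the coefficient of |i>|j'>. *)
From HB Require Import structures.
From mathcomp Require Import all_boot all_order all_algebra.
Set Implicit Arguments.
Unset Strict Implicit.
Unset Printing Implicit Defensive.
Import Order.TTheory GRing.Theory Num.Theory.
Local Open Scope ring_scope.

Section QDefs.
Variable C : numClosedFieldType.

Definition vec23 := 'M[C]_(2, 3).

Definition inner (u v : vec23) : C :=
  \sum_(i < 2) \sum_(j < 3) (u i j)^* * v i j.

(* reduced state on the qubit: rho_A = Tr_B |psi><psi| = Psi Psi^dagger *)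
Definition rhoA (psi : vec23) : 'M[C]_2 :=
  psi *m map_mx Num.conj psi^T.

Definition is_state (psi : vec23) : Prop := inner psi psi = 1.

Definition max_entangled (psi : vec23) : Prop :=
  is_state psi /\ rhoA psi = (2%:R)^-1 %:M.

Definition q0 : 'I_2 := @Ordinal 2 0 isT.
Definition q1 : 'I_2 := @Ordinal 2 1 isT.
Definition t0 : 'I_3 := @Ordinal 3 0 isT.
Definition t1 : 'I_3 := @Ordinal 3 1 isT.
Definition ket (i : 'I_2) (j : 'I_3) : vec23 := delta_mx i j.

Definition s2inv : C := (sqrtC 2%:R)^-1.

Definition phi1 : vec23 := s2inv *: (ket q0 t0 - ket q1 t1).
Definition phi2 : vec23 := s2inv *: (ket q0 t1 + ket q1 t0).
Definition phi3 : vec23 := s2inv *: (ket q0 t1 - ket q1 t0).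

Definition in_complement (psi : vec23) : Prop :=
  inner phi1 psi = 0 /\ inner phi2 psi = 0 /\ inner phi3 psi = 0.
End QDefs.

(* Main.v *)
Require Import Defs.
From HB Require Import structures.
From mathcomp Require Import all_boot all_order all_algebra.
From mathcomp Require Import ring.
Import Order.TTheory GRing.Theory Num.Theory.
Local Open Scope ring_scope.

Section S.
Variable C : numClosedFieldType.
Definition t2 : 'I_3 := @Ordinal 3 2 isT.
Lemma sum2 (F : 'I_2 -> C) : \sum_(i < 2) F i = F q0 + F q1.
Proof. by rewrite !big_ord_recl big_ord0 addr0; congr (F _ + F _); apply: val_inj. Qed.
Lemma sum3 (F : 'I_3 -> C) : \sum_(i < 3) F i = F t0 + F t1 + F t2.
Proof. by rewrite !big_ord_recl big_ord0 addr0 addrA; congr (F _ + F _ + F _); apply: val_inj. Qed.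
Lemma s2inv_neq0 : (s2inv C)^* != 0.
Proof. by rewrite conjC_eq0 invr_eq0 sqrtC_eq0 pnatr_eq0. Qed.

Ltac simpc := rewrite ?(rmorphM, rmorphB, rmorphD, rmorph1, rmorph0, rmorphN); ring.

Lemma inner_phi1 psi : inner (phi1 C) psi = (s2inv C)^* * (psi q0 t0 - psi q1 t1).
Proof. rewrite /inner sum2 !sum3 /phi1 /ket !mxE /=; simpc. Qed.
Lemma inner_phi2 psi : inner (phi2 C) psi = (s2inv C)^* * (psi q0 t1 + psi q1 t0).
Proof. rewrite /inner sum2 !sum3 /phi2 /ket !mxE /=; simpc. Qed.
Lemma inner_phi3 psi : inner (phi3 C) psi = (s2inv C)^* * (psi q0 t1 - psi q1 t0).
Proof. rewrite /inner sum2 !sum3 /phi3 /ket !mxE /=; simpc. Qed.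

Lemma rhoAE (psi : vec23 C) i k : rhoA psi i k = \sum_(j < 3) psi i j * (psi k j)^*.
Proof. by rewrite /rhoA !mxE; apply: eq_bigr => j _; rewrite !mxE. Qed.

Lemma key (psi : vec23 C) : max_entangled psi -> in_complement psi ->
  [/\ psi q0 t1 = 0, psi q1 t0 = 0, psi q0 t2 = 0, psi q1 t2 = 0 &
     psi q1 t1 = psi q0 t0 /\ psi q0 t0 * (psi q0 t0)^* = 2%:R^-1].
Proof.
move=> [_ Hr] [H1 [H2 H3]].
move: H1 H2 H3; rewrite inner_phi1 inner_phi2 inner_phi3.
move=> /eqP; rewrite mulf_eq0 (negPf s2inv_neq0) /= subr_eq0 => /eqP E1.
move=> /eqP; rewrite mulf_eq0 (negPf s2inv_neq0) /= => /eqP E2.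
move=> /eqP; rewrite mulf_eq0 (negPf s2inv_neq0) /= subr_eq0 => /eqP E3.
have a10 : psi q1 t0 = 0.
  have : psi q1 t0 *+ 2 = 0 by rewrite mulr2n -{1}E3.
  by move/eqP; rewrite mulrn_eq0 /= => /eqP.
have a01 : psi q0 t1 = 0 by rewrite E3.
have R00 := congr1 (fun M : 'M[C]_2 => M q0 q0) Hr.
have R11 := congr1 (fun M : 'M[C]_2 => M q1 q1) Hr.
have R01 := congr1 (fun M : 'M[C]_2 => M q0 q1) Hr.
move: R00 R11 R01; rewrite /= !rhoAE !sum3 !mxE /= -E1 a10 a01 !rmorph0 !mulr0 !mul0r !addr0 !add0r.
rewrite !mulr1n mulr0n => R00 R11 /eqP.
rewrite mulf_eq0 conjC_eq0 => /orP [] /eqP Z.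
- move: R00; rewrite Z mul0r addr0 => R00.
  have : psi q1 t2 * (psi q1 t2)^* = 0 by apply: (addrI (psi q0 t0 * (psi q0 t0)^*)); rewrite R11 R00 addr0.
  by move/eqP; rewrite mul_conjC_eq0 => /eqP W.
- move: R11; rewrite Z mul0r addr0 => R11.
  have : psi q0 t2 * (psi q0 t2)^* = 0 by apply: (addrI (psi q0 t0 * (psi q0 t0)^*)); rewrite R00 R11 addr0.
  by move/eqP; rewrite mul_conjC_eq0 => /eqP W.
Qed.

Lemma no_two (p q : vec23 C) : max_entangled p -> in_complement p ->
  max_entangled q -> in_complement q -> inner p q <> 0.
Proof.
move=> mp cp mq cq.
have [p01 p10 p02 p12 [p11 pn]] := key _ mp cp.
have [q01 q10 q02 q12 [q11 qn]] := key _ mq cq.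
rewrite /inner sum2 !sum3 p01 p10 p02 p12 q01 q10 q02 q12 p11 q11 !rmorph0 !mul0r !addr0 !add0r.
move/eqP; rewrite -mulr2n mulrn_eq0 /= mulf_eq0 conjC_eq0 => /orP [] /eqP Z.
- by move: pn; rewrite Z mul0r => /esym/eqP; rewrite invr_eq0 pnatr_eq0.
- by move: qn; rewrite Z mul0r => /esym/eqP; rewrite invr_eq0 pnatr_eq0.
Qed.
End S.

Theorem proposition3 (C : numClosedFieldType) :
  (~ exists psi1 psi2 psi3 : vec23 C,
       [/\ max_entangled psi1, max_entangled psi2 & max_entangled psi3] /\
       [/\ in_complement psi1, in_complement psi2 & in_complement psi3] /\
       [/\ inner psi1 psi2 = 0, inner psi1 psi3 = 0 & inner psi2 psi3 = 0])
  /\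
  (~ exists psi4 psi5 psi6 : vec23 C,
       let b := [:: phi1 C; phi2 C; phi3 C; psi4; psi5; psi6] in
       [/\ max_entangled psi4, max_entangled psi5, max_entangled psi6,
           (forall i j : 'I_6, (i != j) -> inner (nth 0 b i) (nth 0 b j) = 0)
         & (forall i : 'I_6, inner (nth 0 b i) (nth 0 b i) = 1)]).
Proof.
split.
  move=> [p1 [p2 [p3 [[m1 m2 m3] [[c1 c2 c3] [i12 _ _]]]]]].
  exact: (@no_two C p1 p2 m1 c1 m2 c2 i12).
move=> [p4 [p5 [p6 /= [m4 m5 _ H _]]]].
have c4 : in_complement p4.
  split; [exact: (H (@Ordinal 6 0 isT) (@Ordinal 6 3 isT) isT)|split].
  exact: (H (@Ordinal 6 1 isT) (@Ordinal 6 3 isT) isT).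
  exact: (H (@Ordinal 6 2 isT) (@Ordinal 6 3 isT) isT).
have c5 : in_complement p5.
  split; [exact: (H (@Ordinal 6 0 isT) (@Ordinal 6 4 isT) isT)|split].
  exact: (H (@Ordinal 6 1 isT) (@Ordinal 6 4 isT) isT).
  exact: (H (@Ordinal 6 2 isT) (@Ordinal 6 4 isT) isT).
exact: (@no_two C p4 p5 m4 c4 m5 c5 (H (@Ordinal 6 3 isT) (@Ordinal 6 4 isT) isT)).
Qed.
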